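(* Let $f_0\in\mathbb{R}$, $g\in\mathbb{R}^n$, $H$ a symmetric $n\times n$ matrix, $\sigma>0$, and $m(s)=f_0+\langle g,s\rangle+\frac12\langle Hs,s\rangle+\frac16\sigma\|s\|^3$. Let $s_k\in\mathbb{R}^n$ with $m(s_k)\le m(0)$, set $g_k=g+Hs_k$, and assume $\|g_k\|_{r,1}<\frac12\sigma\|s_k\|^2$. Let $\alpha_k^R$ be a minimizer of $\alpha\mapsto m(s_k-\alpha s_k)$ over $\alpha\ge0$ and $s_k^R=(1-\alpha_k^R)s_k$. Then $$m(s_k)-m(s_k^R)\ge\frac12\min\left[\frac{\big|\|g_k\|_{r,1}-\frac12\sigma\|s_k\|^2\big|^2}{1+\frac32(\|H\|_{r,2}+\sigma\|s_k\|)},\ \frac{\big|\|g_k\|_{r,1}-\frac12\sigma\|s_k\|^2\big|^{3/2}}{3\sqrt\sigma}\right].$$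
   Context: $\|\cdot\|$ is an arbitrary (possibly non-smooth) norm on $\mathbb{R}^n$, $\langle\cdot,\cdot\rangle$ the Euclidean inner product, $\|v\|_{r,1}=\max_{\|s\|=1}|\langle v,s\rangle|$ the dual norm, and for a symmetric matrix $H$, $\|H\|_{r,2}=\max_{\|v\|=1}|\langle Hv,v\rangle|$. *)

(* Defs.v *)
From HB Require Import structures.
From mathcomp Require Import all_boot all_order all_algebra.
From mathcomp Require Import all_classical all_reals all_analysis.
Set Implicit Arguments. Unset Strict Implicit. Unset Printing Implicit Defensive.
Import Order.TTheory GRing.Theory Num.Theory.
Local Open Scope ring_scope.
Local Open Scope classical_set_scope.

Definition dotp (R : realType) (n : nat) (u v : 'cV[R]_n) : R :=
  \sum_(i < n) u i 0 * v i 0.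

Definition is_norm (R : realType) (n : nat) (nrm : 'cV[R]_n -> R) : Prop :=
  [/\ (forall x, 0 <= nrm x),
      (forall x, nrm x = 0 -> x = 0),
      (forall (a : R) x, nrm (a *: x) = `|a| * nrm x)
    & (forall x y, nrm (x + y) <= nrm x + nrm y)].

(* Dual norm ||v||_{r,1} = max_{||s||=1} |<v,s>| (the max is a sup). *)
Definition dual_norm (R : realType) (n : nat) (nrm : 'cV[R]_n -> R)
  (v : 'cV[R]_n) : R :=
  sup [set `|dotp v s| | s in [set s | nrm s = 1]].

(* ||H||_{r,2} = max_{||v||=1} |<Hv,v>|. *)
Definition mat_norm2 (R : realType) (n : nat) (nrm : 'cV[R]_n -> R)
  (H : 'M[R]_n) : R :=
  sup [set `|dotp (H *m v) v| | v in [set v | nrm v = 1]].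

Definition cubic_model (R : realType) (n : nat) (nrm : 'cV[R]_n -> R)
  (f0 : R) (g : 'cV[R]_n) (H : 'M[R]_n) (sigma : R) (s : 'cV[R]_n) : R :=
  f0 + dotp g s + 2^-1 * dotp (H *m s) s + 6^-1 * sigma * nrm s ^+ 3.

(* Main.v *)
Require Import Defs.
From HB Require Import structures.
From mathcomp Require Import all_boot all_order all_algebra.
From mathcomp Require Import all_classical all_reals all_analysis.
From mathcomp Require Import ring lra.
Import Order.TTheory GRing.Theory Num.Theory.
Import numFieldTopology.Exports numFieldNormedType.Exports.
Local Open Scope ring_scope.
Local Open Scope classical_set_scope.

Lemma nrm0 (R : realType) (n : nat) (nrm : 'cV[R]_n -> R) :
  is_norm nrm -> nrm 0 = 0.
Proof. by case=> _ _ hZ _; rewrite -(scale0r 0) hZ normr0 mul0r. Qed.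

Arguments nrm0 {R n nrm}.
Lemma nrm_sum (R : realType) (n : nat) (nrm : 'cV[R]_n -> R) (I : Type)
  (r : seq I) (F : I -> 'cV[R]_n) :
  is_norm nrm -> nrm (\sum_(i <- r) F i) <= \sum_(i <- r) nrm (F i).
Proof.
move=> hn; elim: r => [|a r IH]; first by rewrite !big_nil nrm0.
rewrite !big_cons; case: hn => _ _ _ hT.
by apply: le_trans (hT _ _) _; rewrite lerD2l.
Qed.

Arguments nrm_sum {R n nrm I}.
Lemma nrm_lip (R : realType) (n : nat) (nrm : 'cV[R]_n -> R) (v : 'cV[R]_n) :
  is_norm nrm -> nrm v <= `|v^T| * \sum_(i < n) nrm (delta_mx i 0).
Proof.
move=> hn; rewrite {1}(matrix_sum_delta v) mulr_sumr.
apply: (le_trans (nrm_sum _ _ hn)); apply: ler_sum => i _.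
rewrite big_ord1; case: hn => h0 _ hZ _; rewrite hZ ler_wpM2r //.
have -> : v i ord0 = v^T ord0 i by rewrite mxE.
change (`|v^T ord0 i| <= mx_norm v^T); rewrite mx_normrE; apply/bigmax_geP; right; by exists (ord0, i).
Qed.

Arguments nrm_lip {R n nrm}.
Lemma nrmN (R : realType) (n : nat) (nrm : 'cV[R]_n -> R) (v : 'cV[R]_n) :
  is_norm nrm -> nrm (- v) = nrm v.
Proof. by case=> _ _ hZ _; rewrite -scaleN1r hZ normrN1 mul1r. Qed.

Arguments nrmN {R n nrm}.
Lemma nrm_cont (R : realType) (n : nat) (nrm : 'cV[R]_n -> R) :
  is_norm nrm -> continuous (fun x : 'rV[R]_n => nrm x^T).
Proof.
move=> hn x; set K := \sum_(i < n) nrm (delta_mx i 0).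
have K0 : 0 <= K by apply: sumr_ge0 => i _; case: hn.
move=> s /= /(nbhs_ballP (nrm x^T)) [e e0 es].
have eK : 0 < e / (K + 1) by rewrite divr_gt0 // ltr_wpDl.
apply/nbhs_ballP; exists (e / (K + 1)) => // y hy; apply: es.
move: hy; rewrite -!ball_normE /ball_ /= => hy.
have hT : forall a b, nrm a <= nrm (a - b) + nrm b.
  by move=> a b; case: hn => _ _ _ hT; rewrite -{1}(subrK b a); apply: hT.
have h1 : `|nrm x^T - nrm y^T| <= nrm (x^T - y^T).
  have A := hT x^T y^T; have B := hT y^T x^T.
  rewrite -opprB (nrmN _ hn) in B.
  by rewrite ler_norml; apply/andP; split; lra.
apply: (le_lt_trans h1).
have -> : x^T - y^T = (x - y)^T by rewrite linearB.
apply: (le_lt_trans (nrm_lip _ hn)).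
apply: (@le_lt_trans _ _ (`|x - y| * (K + 1))).
  by rewrite trmxK ler_wpM2l // lerDl.
by rewrite -ltr_pdivlMr // ltr_wpDl.
Qed.

Arguments nrm_cont {R n nrm}.
Lemma coord_bound (R : realType) (n : nat) (nrm : 'cV[R]_n -> R) :
  is_norm nrm -> exists C : R, 0 <= C /\
    forall s, nrm s = 1 -> forall i, `|s i 0| <= C.
Proof.
move=> hn.
case: (pselect (exists s0, nrm s0 = 1)) => [[s0 hs0]|hno]; last first.
  by exists 0; split=> // s hs; exfalso; apply: hno; exists s.
have nz : forall s, nrm s = 1 -> `|s^T| \is a GRing.unit.
  move=> s hs; rewrite unitfE normr_eq0; apply/negP => /eqP h.
  have : s = 0 by rewrite -(trmxK s) h linear0.
  by move=> sz; move: hs; rewrite sz (nrm0 hn) => /eqP; rewrite eq_sym oner_eq0.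
set S := [set x : 'rV[R]_n | `|x| = 1].
have S0 : S !=set0 by exists (`|s0^T|^-1 *: s0^T); rewrite /S /= normrZV // nz.
have cS : compact S.
  apply: bounded_closed_compact.
    exists 1; split => // M M1 x /=; rewrite /S /= => ->.
    by apply: ltW.
  have := @preimage_closed _ _ (@Num.norm _ 'rV[R]_n) (fun x : R => x = 1).
  by apply; [move=> x _; exact: norm_continuous|exact: closed_eq].
have [c0 c0S hmin] := compact_EVT_min S0 cS (continuous_subspaceT (nrm_cont hn)).
move: c0S; rewrite in_setE /S /= => c0S.
have hZ : forall (a : R) x, nrm (a *: x) = `|a| * nrm x by case: hn.
have c0nz : c0^T != 0.
  apply/negP => /eqP h; move: c0S.
  have -> : c0 = 0 by rewrite -(trmxK c0) h linear0.
  by rewrite normr0 => /eqP; rewrite eq_sym oner_eq0.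
have cpos : 0 < nrm c0^T.
  case: hn => h0 h00 _ _; rewrite lt_def h0 andbT.
  by apply/negP => /eqP /h00 h; move: c0nz; rewrite h eqxx.
exists (nrm c0^T)^-1; split; first by rewrite invr_ge0 ltW.
move=> s hs i.
have mu := nz s hs; set m := `|s^T| in mu *.
have mpos : 0 < m by rewrite lt_def normr_ge0 andbT -unitfE.
have : nrm c0^T <= nrm (m^-1 *: s^T)^T.
  by apply: hmin; rewrite in_setE /S /= normrZV.
rewrite linearZ /= trmxK hZ hs mulr1 ger0_norm; last by rewrite invr_ge0 ltW.
move=> hc.
have hm : m <= (nrm c0^T)^-1.
  by rewrite -(invrK m) lef_pV2 // ?posrE ?invr_gt0.
apply: (le_trans _ hm).
have -> : s i 0 = s^T 0 i by rewrite mxE.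
change (`|s^T 0 i| <= mx_norm s^T); rewrite mx_normrE; apply/bigmax_geP; right.
by exists (0, i).
Qed.

Arguments coord_bound {R n nrm}.
Lemma dotpZr (R : realType) (n : nat) (u v : 'cV[R]_n) (a : R) :
  dotp u (a *: v) = a * dotp u v.
Proof. rewrite /dotp mulr_sumr; apply: eq_bigr => i _; rewrite mxE; ring. Qed.

Lemma dotpZl (R : realType) (n : nat) (u v : 'cV[R]_n) (a : R) :
  dotp (a *: u) v = a * dotp u v.
Proof. rewrite /dotp mulr_sumr; apply: eq_bigr => i _; rewrite mxE; ring. Qed.

Lemma dotpDl (R : realType) (n : nat) (u w v : 'cV[R]_n) :
  dotp (u + w) v = dotp u v + dotp w v.
Proof. rewrite /dotp -big_split; apply: eq_bigr => i _; by rewrite mxE mulrDl. Qed.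

Lemma dotpHZ (R : realType) (n : nat) (H : 'M[R]_n) (v : 'cV[R]_n) (a : R) :
  dotp (H *m (a *: v)) (a *: v) = a ^+ 2 * dotp (H *m v) v.
Proof. by rewrite -scalemxAr dotpZr dotpZl mulrA expr2. Qed.

Lemma dual_ub (R : realType) (n : nat) (nrm : 'cV[R]_n -> R) (v : 'cV[R]_n) :
  is_norm nrm -> has_ubound [set `|dotp v s| | s in [set s | nrm s = 1]].
Proof.
move=> hn; have [C [C0 hC]] := coord_bound hn.
exists (\sum_(i < n) `|v i 0| * C) => _ [s hs <-].
apply: (le_trans (ler_norm_sum _ _ _)); apply: ler_sum => i _.
by rewrite normrM ler_wpM2l // hC.
Qed.

Lemma mat_ub (R : realType) (n : nat) (nrm : 'cV[R]_n -> R) (H : 'M[R]_n) :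
  is_norm nrm -> has_ubound [set `|dotp (H *m v) v| | v in [set v | nrm v = 1]].
Proof.
move=> hn; have [C [C0 hC]] := coord_bound hn.
exists (\sum_(i < n) (\sum_(j < n) `|H i j| * C) * C) => _ [s hs <-].
apply: (le_trans (ler_norm_sum _ _ _)); apply: ler_sum => i _.
rewrite normrM; apply: ler_pM => //; last exact: hC.
rewrite mxE; apply: (le_trans (ler_norm_sum _ _ _)); apply: ler_sum => j _.
by rewrite normrM ler_wpM2l // hC.
Qed.

Lemma sup_abs_ge0 (R : realType) (n : nat) (nrm : 'cV[R]_n -> R) (F : 'cV[R]_n -> R) :
  has_ubound [set `|F s| | s in [set s | nrm s = 1]] ->
  0 <= sup [set `|F s| | s in [set s | nrm s = 1]].
Proof.
move=> hu.
case: (pselect (exists s0, nrm s0 = 1)) => [[s0 hs0]|hno].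
  apply: (le_trans (normr_ge0 (F s0))); apply: ub_le_sup => //.
  by exists s0.
rewrite sup_out // => -[[_ [s hs _]] _]; apply: hno; by exists s.
Qed.

Lemma sup_abs_ge (R : realType) (n : nat) (nrm : 'cV[R]_n -> R) (F : 'cV[R]_n -> R) s :
  has_ubound [set `|F s| | s in [set s | nrm s = 1]] -> nrm s = 1 ->
  `|F s| <= sup [set `|F s| | s in [set s | nrm s = 1]].
Proof. by move=> hu hs; apply: ub_le_sup => //; exists s. Qed.

Local Close Scope classical_set_scope.

Theorem lemma5p3 (R : realType) (n : nat) (nrm : 'cV[R]_n -> R)
  (f0 : R) (g : 'cV[R]_n) (H : 'M[R]_n) (sigma : R)
  (sk : 'cV[R]_n) (alphaR : R) :
  is_norm nrm ->
  H^T = H ->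
  0 < sigma ->
  cubic_model nrm f0 g H sigma sk <= cubic_model nrm f0 g H sigma 0 ->
  dual_norm nrm (g + H *m sk) < 2^-1 * sigma * nrm sk ^+ 2 ->
  0 <= alphaR ->
  (forall a : R, 0 <= a ->
     cubic_model nrm f0 g H sigma (sk - alphaR *: sk)
       <= cubic_model nrm f0 g H sigma (sk - a *: sk)) ->
  let gk := g + H *m sk in
  let d := `| dual_norm nrm gk - 2^-1 * sigma * nrm sk ^+ 2 | in
  cubic_model nrm f0 g H sigma sk
    - cubic_model nrm f0 g H sigma ((1 - alphaR) *: sk)
  >= 2^-1 * Num.min
       (d ^+ 2 / (1 + 3 / 2 * (mat_norm2 nrm H + sigma * nrm sk)))
       (d `^ (3 / 2) / (3 * Num.sqrt sigma)).
Proof.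
move=> hn _ hs _ hD ha hmin; rewrite /=.
set gk := g + H *m sk.
set d := `| dual_norm nrm gk - _|.
have hZ : forall (a : R) x, nrm (a *: x) = `|a| * nrm x by case: hn.
set rho := nrm sk in hD d *.
set D := dual_norm nrm gk in hD d *.
set M := mat_norm2 nrm H.
have D0 : 0 <= D by apply: sup_abs_ge0; apply: dual_ub.
have M0 : 0 <= M by apply: sup_abs_ge0; apply: mat_ub.
have rho0 : 0 <= rho by case: hn => h0 _ _ _; apply: h0.
have rhop : 0 < rho.
  rewrite lt_def rho0 andbT; apply/negP => /eqP r0.
  by move: hD; rewrite r0 expr0n /= mulr0 => /(le_lt_trans D0); rewrite ltxx.
have dE : d = 2^-1 * sigma * rho ^+ 2 - D.
  by rewrite /d ltr0_norm ?opprB // subr_lt0.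
have dpos : 0 < d by rewrite dE subr_gt0.
set a := dotp gk sk.
set b := dotp (H *m sk) sk.
have s1 : nrm (rho^-1 *: sk) = 1.
  by rewrite hZ ger0_norm ?invr_ge0 // mulVf // gt_eqF.
have Fa : - (D * rho) <= a.
  have h : `|dotp gk (rho^-1 *: sk)| <= D :=
    @sup_abs_ge R n nrm (dotp gk) _ (@dual_ub _ _ _ gk hn) s1.
  rewrite dotpZr normrM ger0_norm ?invr_ge0 // mulrC ler_pdivrMr // in h.
  by move: h; rewrite ler_norml => /andP[].
have Fb : b <= M * rho ^+ 2.
  have h : `|dotp (H *m (rho^-1 *: sk)) (rho^-1 *: sk)| <= M :=
    @sup_abs_ge R n nrm (fun v => dotp (H *m v) v) _ (@mat_ub _ _ _ H hn) s1.
  rewrite dotpHZ normrM ger0_norm ?exprn_ge0 ?invr_ge0 // mulrC exprVn ler_pdivrMr ?exprn_gt0 // in h.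
  by move: h; rewrite ler_norml => /andP[].
set K := M + sigma * rho.
have Kpos : 0 < K by rewrite /K ltr_wpDl // mulr_gt0.
set al := d / (rho * K).
have al0 : 0 <= al by rewrite /al divr_ge0 // ?mulr_ge0 // ltW.
have al1 : al <= 1.
  rewrite /al ler_pdivrMr ?mulr_gt0 // mul1r dE /K mulrDr.
  have : 0 <= rho * M by rewrite mulr_ge0.
  have : 0 <= sigma * rho ^+ 2 by rewrite mulr_ge0 ?exprn_ge0 // ltW.
  have -> : rho * (sigma * rho) = sigma * rho ^+ 2 by rewrite expr2; ring.
  lra.
have hm := hmin al al0.
rewrite scalerBl scale1r.
set T := 2^-1 * (d ^+ 2 / K).
have PA : 2^-1 * Num.min
       (d ^+ 2 / (1 + 3 / 2 * (M + sigma * rho)))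
       (d `^ (3 / 2) / (3 * Num.sqrt sigma)) <= T.
  rewrite /T ler_wpM2l ?invr_ge0 ?ler0n //.
  rewrite ge_min; apply/orP; left; rewrite -/K.
  rewrite ler_pM2l ?exprn_gt0 // lef_pV2 ?posrE //; lra.
apply: (le_trans PA).
suff PB : T <= cubic_model nrm f0 g H sigma sk - cubic_model nrm f0 g H sigma (sk - al *: sk).
  by apply: (le_trans PB); rewrite lerD2l lerN2.
have -> : sk - al *: sk = (1 - al) *: sk by rewrite scalerBl scale1r.
rewrite /cubic_model dotpZr dotpHZ hZ (ger0_norm (x := 1 - al)); last by lra.
rewrite -/rho -/b.
set G := dotp g sk.
have aE : a = G + b by rewrite /a /gk dotpDl.
have e1 : al * (rho * d) <= al * (a + 2^-1 * sigma * rho ^+ 3).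
  rewrite ler_wpM2l //.
  have -> : rho * d = 2^-1 * sigma * rho ^+ 3 - D * rho by rewrite dE; ring.
  lra.
have e2 : al ^+ 2 * (b + sigma * rho ^+ 3) <= al ^+ 2 * (rho ^+ 2 * K).
  rewrite ler_wpM2l ?exprn_ge0 //.
  have -> : rho ^+ 2 * K = M * rho ^+ 2 + sigma * rho ^+ 3 by rewrite /K; ring.
  lra.
have e3 : 0 <= al ^+ 3 * sigma * rho ^+ 3.
  by apply: mulr_ge0; [apply: mulr_ge0; [exact: exprn_ge0|exact: ltW]|exact: exprn_ge0].
have e4 : al * (rho * d) - 2^-1 * (al ^+ 2 * (rho ^+ 2 * K)) = T.
  rewrite /T /al; field.
  by rewrite !gt_eqF.
rewrite aE in e1.
have E1 : al * (G + b + 2^-1 * sigma * rho ^+ 3) = al * G + al * b + 2^-1 * sigma * al * rho ^+ 3 by ring.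
have E2 : al ^+ 2 * (b + sigma * rho ^+ 3) = al ^+ 2 * b + sigma * al ^+ 2 * rho ^+ 3 by ring.
have E3 : 6^-1 * sigma * ((1 - al) * rho) ^+ 3 = 6^-1 * sigma * rho ^+ 3 - 2^-1 * sigma * al * rho ^+ 3 + 2^-1 * sigma * al ^+ 2 * rho ^+ 3 - 6^-1 * (al ^+ 3 * sigma * rho ^+ 3) by field.
have E4 : (1 - al) * G = G - al * G by ring.
have E5 : (1 - al) ^+ 2 * b = b - 2 * (al * b) + al ^+ 2 * b by ring.
rewrite E3 E4 E5.
lra.
Qed.
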